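(* (Weak progress for $\lambda_{\mathrm{act}}$ configurations.) Let $\cdot ; \cdot \vdash \mathcal{C}$, suppose $\mathcal{C}$ cannot reduce (there is no $\mathcal{C}'$ with $\mathcal{C}\longrightarrow\mathcal{C}'$), and let $\mathcal{C}' = (\nu a_1) \ldots (\nu a_n)(\langle a_1, M_1, \vec V_1\rangle \parallel \ldots \parallel \langle a_n, M_n, \vec V_n\rangle)$ be a canonical form of $\mathcal{C}$. Then each actor with name $a_i$ is either of the form $\langle a_i, \mathbf{return}\ W, \vec V_i\rangle$ for some value $W$, or of the form $\langle a_i, E[\mathbf{receive}], \epsilon\rangle$ for some evaluation context $E$.
   Context: The calculus $\lambda_{\mathrm{act}}$. Types $A,B,C ::= \mathbf{1} \mid A \xrightarrow{C} B \mid \mathsf{ActorRef}(A)$; $\alpha$ ranges over variables and names; values $V,W ::= \alpha \mid \lambda x.M \mid ()$; computations $M,N ::= V\,W \mid \mathbf{let}\ x \Leftarrow M\ \mathbf{in}\ N \mid \mathbf{return}\ V \mid \mathbf{spawn}\ M \mid \mathbf{send}\ V\ W \mid \mathbf{receive} \mid \mathbf{self}$. Value typing: $\Gamma\vdash\alpha:A$ if $\alpha:A\in\Gamma$; $\Gamma\vdash\lambda x.M:A\xrightarrow{C}B$ if $\Gamma,x:A\mid C\vdash M:B$; $\Gamma\vdash():\mathbf 1$. Computation typing $\Gamma\mid C\vdash M:A$: $V\,W:B$ if $\Gamma\vdash V:A\xrightarrow{C}B$, $\Gamma\vdash W:A$; $\Gamma\mid C\vdash\mathbf{let}\ x\Leftarrow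 M\ \mathbf{in}\ N:B$ if $\Gamma\mid C\vdash M:A$, $\Gamma,x:A\mid C\vdash N:B$; $\Gamma\mid C\vdash\mathbf{return}\ V:A$ if $\Gamma\vdash V:A$; $\Gamma\mid C\vdash\mathbf{send}\ V\ W:\mathbf 1$ if $\Gamma\vdash V:A$, $\Gamma\vdash W:\mathsf{ActorRef}(A)$; $\Gamma\mid A\vdash\mathbf{receive}:A$; $\Gamma\mid C\vdash\mathbf{spawn}\ M:\mathsf{ActorRef}(A)$ if $\Gamma\mid A\vdash M:\mathbf 1$; $\Gamma\mid A\vdash\mathbf{self}:\mathsf{ActorRef}(A)$. Evaluation contexts $E ::= [\,]\mid\mathbf{let}\ x\Leftarrow E\ \mathbf{in}\ M$; term reduction: $(\lambda x.M)V\longrightarrow_{\mathsf{M}} M\{V/x\}$, $\mathbf{let}\ x\Leftarrow\mathbf{return}\ V\ \mathbf{in}\ M\longrightarrow_{\mathsf{M}} M\{V/x\}$, $E[M]\longrightarrow_{\mathsf{M}}E[M']$ if $M\longrightarrow_{\mathsf{M}}M'$. Configurations $\mathcal{C},\mathcal{D} ::= \mathcal{C}\parallel\mathcal{D}\mid(\nu a)\mathcal{C}\mid\langle a,M,\vec V\rangle$ (actor named $a$ evaluating $M$ with mailbox $\vec V$; $\epsilon$ empty). Configuration contexts $G ::= [\,]\mid G\parallel\mathcal{C}\mid(\nu a)G$. Configuration typing: (Par) $\Gamma;\Delta_1\vdash\mathcal{C}_1$, $\Gamma;\Delta_2\vdash\mathcal{C}_2$ give $\Gamma;\Delta_1,\Delta_2\vdash\mathcal{C}_1\parallel\mathcal{C}_2$;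 (Pid) $\Gamma,a:\mathsf{ActorRef}(A);\Delta,a:A\vdash\mathcal{C}$ gives $\Gamma;\Delta\vdash(\nu a)\mathcal{C}$; (Actor) $\Gamma,a:\mathsf{ActorRef}(A)\mid A\vdash M:\mathbf 1$ and $\Gamma,a:\mathsf{ActorRef}(A)\vdash V_i:A$ for all $i$ give $\Gamma,a:\mathsf{ActorRef}(A);a:A\vdash\langle a,M,\vec V\rangle$. Structural congruence $\equiv$: least congruence closed under $G[-]$ with commutativity/associativity of $\parallel$ and $\mathcal{C}\parallel(\nu a)\mathcal{D}\equiv(\nu a)(\mathcal{C}\parallel\mathcal{D})$ if $a\notin\mathsf{fv}(\mathcal{C})$. Reduction $\longrightarrow$ (modulo $\equiv$): $\langle a,E[\mathbf{spawn}\ M],\vec V\rangle\longrightarrow(\nu b)(\langle a,E[\mathbf{return}\ b],\vec V\rangle\parallel\langle b,M,\epsilon\rangle)$, $b$ fresh; $\langle a,E[\mathbf{send}\ V'\ b],\vec V\rangle\parallel\langle b,M,\vec W\rangle\longrightarrow\langle a,E[\mathbf{return}\ ()],\vec V\rangle\parallel\langle b,M,\vec W\cdot V'\rangle$; $\langle a,E[\mathbf{send}\ V'\ a],\vec V\rangle\longrightarrow\langle a,E[\mathbf{return}\ ()],\vec V\cdot V'\rangle$; $\langle a,E[\mathbf{self}],\vec V\rangle\longrightarrow\langle a,E[\mathbf{return}\ a],\vec V\rangle$; $\langle a,E[\mathbf{receive}],W\cdot\vec V\rangle\longrightarrow\langle a,E[\mathbf{return}\ W],\vec V\rangle$; $G[\mathcal{C}_1]\longrightarrow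 G[\mathcal{C}_2]$ if $\mathcal{C}_1\longrightarrow\mathcal{C}_2$; $\langle a,M_1,\vec V\rangle\longrightarrow\langle a,M_2,\vec V\rangle$ if $M_1\longrightarrow_{\mathsf{M}}M_2$. A canonical form of $\mathcal{C}$ is a configuration $\mathcal{C}'\equiv\mathcal{C}$ of the form $(\nu a_1) \ldots (\nu a_n)(\langle a_1, M_1, \vec V_1\rangle \parallel \ldots \parallel \langle a_n, M_n, \vec V_n\rangle)$. *)

(* Defs.v *)
From Stdlib Require Import Arith List Permutation.
Import ListNotations.

Inductive ty : Type :=
| TUnit : ty
| TFun : ty -> ty -> ty -> ty   (* TFun A C B  =  A -{C}-> B *)
| TRef : ty -> ty.

(* Values and computations. Variables are de Bruijn indices; names are nats. *)
Inductive val : Type :=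
| VVar : nat -> val
| VName : nat -> val
| VLam : comp -> val
| VUnit : val
with comp : Type :=
| CApp : val -> val -> comp
| CLet : comp -> comp -> comp (* let x <= M in N, x is index 0 in N *)
| CRet : val -> comp
| CSpawn : comp -> comp
| CSend : val -> val -> comp
| CRecv : comp
| CSelf : comp.

(* Name environments (the name part of Gamma). *)
Definition nenv := nat -> option ty.
Definition nempty : nenv := fun _ => None.
Definition nupd (G : nenv) (a : nat) (T : ty) : nenv :=
  fun b => if Nat.eqb b a then Some T else G b.

Inductive vtyp (G : nenv) (L : list ty) : val -> ty -> Prop :=
| vt_var : forall n A, nth_error L n = Some A -> vtyp G L (VVar n) A
| vt_name : forall a A, G a = Some A -> vtyp G L (VName a) A
| vt_lam : forall M A C B, ctyp G (A :: L) C M B -> vtyp G L (VLam M) (TFun A C B)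
| vt_unit : vtyp G L VUnit TUnit
with ctyp (G : nenv) (L : list ty) : ty -> comp -> ty -> Prop :=
| ct_app : forall V W A C B,
    vtyp G L V (TFun A C B) -> vtyp G L W A -> ctyp G L C (CApp V W) B
| ct_let : forall C M N A B,
    ctyp G L C M A -> ctyp G (A :: L) C N B -> ctyp G L C (CLet M N) B
| ct_ret : forall C V A, vtyp G L V A -> ctyp G L C (CRet V) A
| ct_send : forall C V W A,
    vtyp G L V A -> vtyp G L W (TRef A) -> ctyp G L C (CSend V W) TUnit
| ct_recv : forall A, ctyp G L A CRecv A
| ct_spawn : forall C M A, ctyp G L A M TUnit -> ctyp G L C (CSpawn M) (TRef A)
| ct_self : forall A, ctyp G L A CSelf (TRef A).

Fixpoint lift_v (c : nat) (v : val) : val :=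
  match v with
  | VVar n => if n <? c then VVar n else VVar (S n)
  | VName a => VName a
  | VLam M => VLam (lift_c (S c) M)
  | VUnit => VUnit
  end
with lift_c (c : nat) (M : comp) : comp :=
  match M with
  | CApp V W => CApp (lift_v c V) (lift_v c W)
  | CLet M N => CLet (lift_c c M) (lift_c (S c) N)
  | CRet V => CRet (lift_v c V)
  | CSpawn M => CSpawn (lift_c c M)
  | CSend V W => CSend (lift_v c V) (lift_v c W)
  | CRecv => CRecv
  | CSelf => CSelf
  end.

Fixpoint subst_v (j : nat) (W : val) (v : val) : val :=
  match v with
  | VVar n => if n =? j then W else if j <? n then VVar (pred n) else VVar n
  | VName a => VName a
  | VLam M => VLam (subst_c (S j) (lift_v 0 W) M)
  | VUnit => VUnit
  end
with subst_c (j : nat) (W : val) (M : comp) : comp :=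
  match M with
  | CApp V1 V2 => CApp (subst_v j W V1) (subst_v j W V2)
  | CLet M N => CLet (subst_c j W M) (subst_c (S j) (lift_v 0 W) N)
  | CRet V => CRet (subst_v j W V)
  | CSpawn M => CSpawn (subst_c j W M)
  | CSend V1 V2 => CSend (subst_v j W V1) (subst_v j W V2)
  | CRecv => CRecv
  | CSelf => CSelf
  end.

Inductive ectx : Type :=
| EHole : ectx
| ELet : ectx -> comp -> ectx.

Fixpoint plug (E : ectx) (M : comp) : comp :=
  match E with
  | EHole => M
  | ELet E' N => CLet (plug E' M) N
  end.

Inductive mstep : comp -> comp -> Prop :=
| ms_beta : forall M V, mstep (CApp (VLam M) V) (subst_c 0 V M)
| ms_let : forall V N, mstep (CLet (CRet V) N) (subst_c 0 V N)
| ms_ctx : forall E M M', mstep M M' -> mstep (plug E M) (plug E M').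

Inductive config : Type :=
| KPar : config -> config -> config
| KNu : nat -> config -> config
| KActor : nat -> comp -> list val -> config.

(* Names occurring in terms (terms have no name binders). *)
Fixpoint names_v (v : val) : list nat :=
  match v with
  | VVar _ => []
  | VName a => [a]
  | VLam M => names_c M
  | VUnit => []
  end
with names_c (M : comp) : list nat :=
  match M with
  | CApp V W => names_v V ++ names_v W
  | CLet M N => names_c M ++ names_c N
  | CRet V => names_v V
  | CSpawn M => names_c M
  | CSend V W => names_v V ++ names_v W
  | CRecv => []
  | CSelf => []
  end.

Fixpoint fn_conf (C : config) : list nat :=
  match C with
  | KPar C1 C2 => fn_conf C1 ++ fn_conf C2
  | KNu a C' => filter (fun x => negb (Nat.eqb x a)) (fn_conf C')
  | KActor a M mb => a :: names_c M ++ flat_map names_v mb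
  end.

Fixpoint all_names (C : config) : list nat :=
  match C with
  | KPar C1 C2 => all_names C1 ++ all_names C2
  | KNu a C' => a :: all_names C'
  | KActor a M mb => a :: names_c M ++ flat_map names_v mb
  end.

Definition ren (a b c : nat) : nat := if Nat.eqb c a then b else c.

Fixpoint rename_v (a b : nat) (v : val) : val :=
  match v with
  | VVar n => VVar n
  | VName c => VName (ren a b c)
  | VLam M => VLam (rename_c a b M)
  | VUnit => VUnit
  end
with rename_c (a b : nat) (M : comp) : comp :=
  match M with
  | CApp V W => CApp (rename_v a b V) (rename_v a b W)
  | CLet M N => CLet (rename_c a b M) (rename_c a b N)
  | CRet V => CRet (rename_v a b V)
  | CSpawn M => CSpawn (rename_c a b M)
  | CSend V W => CSend (rename_v a b V) (rename_v a b W)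
  | CRecv => CRecv
  | CSelf => CSelf
  end.

Fixpoint rename_conf (a b : nat) (C : config) : config :=
  match C with
  | KPar C1 C2 => KPar (rename_conf a b C1) (rename_conf a b C2)
  | KNu c C' => if Nat.eqb c a then KNu c C' else KNu c (rename_conf a b C')
  | KActor c M mb => KActor (ren a b c) (rename_c a b M) (map (rename_v a b) mb)
  end.

(* Configuration typing  G ; D |- C   (D a linear list of name:mailbox type) *)
Inductive ktyp : nenv -> list (nat * ty) -> config -> Prop :=
| kt_par : forall G D D1 D2 C1 C2,
    ktyp G D1 C1 -> ktyp G D2 C2 -> Permutation D (D1 ++ D2) ->
    ktyp G D (KPar C1 C2)
| kt_pid : forall G D a A C,
    ktyp (nupd G a (TRef A)) ((a, A) :: D) C -> ktyp G D (KNu a C)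
| kt_actor : forall G a A M mb,
    G a = Some (TRef A) ->
    ctyp G [] A M TUnit ->
    (forall V, In V mb -> vtyp G [] V A) ->
    ktyp G [(a, A)] (KActor a M mb).

Inductive scong : config -> config -> Prop :=
| sc_refl : forall C, scong C C
| sc_sym : forall C D, scong C D -> scong D C
| sc_trans : forall C D E, scong C D -> scong D E -> scong C E
| sc_comm : forall C D, scong (KPar C D) (KPar D C)
| sc_assoc : forall C D E, scong (KPar C (KPar D E)) (KPar (KPar C D) E)
| sc_extr : forall C D a, ~ In a (fn_conf C) ->
    scong (KPar C (KNu a D)) (KNu a (KPar C D))
| sc_alpha : forall a b C, ~ In b (all_names C) ->
    scong (KNu a C) (KNu b (rename_conf a b C))
| sc_ctx_par : forall C C' D, scong C C' -> scong (KPar C D) (KPar C' D)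
| sc_ctx_nu : forall a C C', scong C C' -> scong (KNu a C) (KNu a C').

(* Configuration reduction (before closing under structural congruence). *)
Inductive kstep0 : config -> config -> Prop :=
| ks_spawn : forall a E M mb b,
    ~ In b (fn_conf (KActor a (plug E (CSpawn M)) mb)) ->
    kstep0 (KActor a (plug E (CSpawn M)) mb)
           (KNu b (KPar (KActor a (plug E (CRet (VName b))) mb) (KActor b M [])))
| ks_send : forall a E V' b mb M mbb,
    kstep0 (KPar (KActor a (plug E (CSend V' (VName b))) mb) (KActor b M mbb))
           (KPar (KActor a (plug E (CRet VUnit)) mb) (KActor b M (mbb ++ [V'])))
| ks_send_self : forall a E V' mb,
    kstep0 (KActor a (plug E (CSend V' (VName a))) mb)
           (KActor a (plug E (CRet VUnit)) (mb ++ [V']))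
| ks_self : forall a E mb,
    kstep0 (KActor a (plug E CSelf) mb) (KActor a (plug E (CRet (VName a))) mb)
| ks_recv : forall a E W mb,
    kstep0 (KActor a (plug E CRecv) (W :: mb)) (KActor a (plug E (CRet W)) mb)
| ks_ctx_par : forall C1 C2 D, kstep0 C1 C2 -> kstep0 (KPar C1 D) (KPar C2 D)
| ks_ctx_nu : forall a C1 C2, kstep0 C1 C2 -> kstep0 (KNu a C1) (KNu a C2)
| ks_term : forall a M1 M2 mb, mstep M1 M2 -> kstep0 (KActor a M1 mb) (KActor a M2 mb).

Definition kstep (C D : config) : Prop :=
  exists C' D', scong C C' /\ kstep0 C' D' /\ scong D' D.

(* Canonical forms: (nu a1)...(nu an)(<a1,M1,V1> || ... || <an,Mn,Vn>), n >= 1 *)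
Definition actor_of (x : nat * comp * list val) : config :=
  let '(a, M, mb) := x in KActor a M mb.

Fixpoint par_of (x : nat * comp * list val) (l : list (nat * comp * list val)) : config :=
  match l with
  | [] => actor_of x
  | y :: l' => KPar (actor_of x) (par_of y l')
  end.

Definition nus (ns : list nat) (C : config) : config :=
  fold_right KNu C ns.

Definition canon (x : nat * comp * list val) (l : list (nat * comp * list val)) : config :=
  nus (map (fun y => fst (fst y)) (x :: l)) (par_of x l).

(* Main.v *)
Require Import Defs.
From Stdlib Require Import List Arith Lia Permutation.
Import ListNotations.

Inductive vtyp' (L : list ty) : val -> ty -> Prop :=
| vt'_var : forall n A, nth_error L n = Some A -> vtyp' L (VVar n) A
| vt'_name : forall a A, vtyp' L (VName a) (TRef A)
| vt'_lam : forall M A C B, ctyp' (A :: L) C M B -> vtyp' L (VLam M) (TFun A C B)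
| vt'_unit : vtyp' L VUnit TUnit
with ctyp' (L : list ty) : ty -> comp -> ty -> Prop :=
| ct'_app : forall V W A C B,
    vtyp' L V (TFun A C B) -> vtyp' L W A -> ctyp' L C (CApp V W) B
| ct'_let : forall C M N A B,
    ctyp' L C M A -> ctyp' (A :: L) C N B -> ctyp' L C (CLet M N) B
| ct'_ret : forall C V A, vtyp' L V A -> ctyp' L C (CRet V) A
| ct'_send : forall C V W A,
    vtyp' L V A -> vtyp' L W (TRef A) -> ctyp' L C (CSend V W) TUnit
| ct'_recv : forall A, ctyp' L A CRecv A
| ct'_spawn : forall C M A, ctyp' L A M TUnit -> ctyp' L C (CSpawn M) (TRef A)
| ct'_self : forall A, ctyp' L A CSelf (TRef A).

Scheme vtyp'_mut := Induction for vtyp' Sort Prop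
with ctyp'_mut := Induction for ctyp' Sort Prop.
Scheme vtyp_mut := Induction for vtyp Sort Prop
with ctyp_mut := Induction for ctyp Sort Prop.
Scheme val_mut := Induction for val Sort Prop
with comp_mut := Induction for comp Sort Prop.

Definition allTRef (G : nenv) := forall n T, G n = Some T -> exists A, T = TRef A.

Lemma typ_to' : forall G,
  (forall L V T, vtyp G L V T -> allTRef G -> vtyp' L V T) /\
  (forall L A M B, ctyp G L A M B -> allTRef G -> ctyp' L A M B).
Proof.
  intro G; split; [apply (vtyp_mut G (fun L V T _ => allTRef G -> vtyp' L V T)
     (fun L A M B _ => allTRef G -> ctyp' L A M B))
   | apply (ctyp_mut G (fun L V T _ => allTRef G -> vtyp' L V T)
     (fun L A M B _ => allTRef G -> ctyp' L A M B))];
  intros; try (econstructor; eauto; fail).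
  all: destruct (H _ _ e) as [A' ->]; constructor.
Qed.

Lemma typ_names : forall G n,
  (forall L V T, vtyp G L V T -> In n (names_v V) -> G n <> None) /\
  (forall L A M B, ctyp G L A M B -> In n (names_c M) -> G n <> None).
Proof.
  intros G n; split; [apply (vtyp_mut G (fun L V T _ => In n (names_v V) -> G n <> None)
     (fun L A M B _ => In n (names_c M) -> G n <> None))
   | apply (ctyp_mut G (fun L V T _ => In n (names_v V) -> G n <> None)
     (fun L A M B _ => In n (names_c M) -> G n <> None))];
  simpl; intros; try (rewrite in_app_iff in *; intuition; fail); try tauto.
  destruct H as [<-|[]]; congruence.
  destruct H as [<-|[]]; congruence.
Qed.

Lemma rename_typ' : forall a b,
  (forall L V T, vtyp' L V T -> vtyp' L (rename_v a b V) T) /\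
  (forall L A M B, ctyp' L A M B -> ctyp' L A (rename_c a b M) B).
Proof.
  intros a b; split; [apply (vtyp'_mut (fun L V T _ => vtyp' L (rename_v a b V) T)
     (fun L A M B _ => ctyp' L A (rename_c a b M) B))
   | apply (ctyp'_mut (fun L V T _ => vtyp' L (rename_v a b V) T)
     (fun L A M B _ => ctyp' L A (rename_c a b M) B))];
  simpl; intros; econstructor; eauto.
Qed.

Lemma rename_typ'_inv : forall a b,
  (forall V L T, vtyp' L (rename_v a b V) T -> vtyp' L V T) /\
  (forall M L A B, ctyp' L A (rename_c a b M) B -> ctyp' L A M B).
Proof.
  intros a b; split; [apply (val_mut (fun V => forall L T, vtyp' L (rename_v a b V) T -> vtyp' L V T)
     (fun M => forall L A B, ctyp' L A (rename_c a b M) B -> ctyp' L A M B))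
   | apply (comp_mut (fun V => forall L T, vtyp' L (rename_v a b V) T -> vtyp' L V T)
     (fun M => forall L A B, ctyp' L A (rename_c a b M) B -> ctyp' L A M B))];
  simpl; intros; match goal with H : _ |- _ => inversion H; subst end; econstructor; eauto.
Qed.

Lemma names_rename : forall a b,
  (forall V, names_v (rename_v a b V) = map (ren a b) (names_v V)) /\
  (forall M, names_c (rename_c a b M) = map (ren a b) (names_c M)).
Proof.
  intros a b; split; [apply (val_mut (fun V => names_v (rename_v a b V) = map (ren a b) (names_v V))
     (fun M => names_c (rename_c a b M) = map (ren a b) (names_c M)))
   | apply (comp_mut (fun V => names_v (rename_v a b V) = map (ren a b) (names_v V))
     (fun M => names_c (rename_c a b M) = map (ren a b) (names_c M)))];
  simpl; intros; rewrite ?map_app; congruence.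
Qed.

Lemma flat_rename : forall a b mb,
  flat_map names_v (map (rename_v a b) mb) = map (ren a b) (flat_map names_v mb).
Proof.
  induction mb; simpl; auto. rewrite map_app, IHmb, (proj1 (names_rename a b)); auto.
Qed.

Lemma In_map_ren : forall a b n l,
  In n (map (ren a b) l) <-> (n <> a /\ In n l) \/ (n = b /\ In a l).
Proof.
  intros. rewrite in_map_iff. unfold ren. split.
  - intros [m [Hm Hin]]. destruct (Nat.eqb_spec m a); subst; auto.
  - intros [[Hn Hin]|[-> Hin]].
    + exists n. destruct (Nat.eqb_spec n a); tauto.
    + exists a. rewrite Nat.eqb_refl. auto.
Qed.

Lemma In_filt : forall n c l,
  In n (filter (fun x => negb (Nat.eqb x c)) l) <-> In n l /\ n <> c.
Proof.
  intros. rewrite filter_In. destruct (Nat.eqb_spec n c); simpl; intuition.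
Qed.

Lemma fn_all : forall C n, In n (fn_conf C) -> In n (all_names C).
Proof.
  induction C; simpl; intros.
  - rewrite in_app_iff in *; intuition.
  - rewrite In_filt in H. intuition.
  - auto.
Qed.

Lemma fn_rename : forall a b C, ~ In b (all_names C) -> forall n,
  In n (fn_conf (rename_conf a b C)) <-> (n <> a /\ In n (fn_conf C)) \/ (n = b /\ In a (fn_conf C)).
Proof.
  induction C; intros Hb m; cbn [rename_conf fn_conf all_names] in *.
  - rewrite in_app_iff in Hb. rewrite !in_app_iff, IHC1, IHC2 by tauto. tauto.
  - destruct (Nat.eqb n a) eqn:E.
    + apply Nat.eqb_eq in E. subst. simpl. rewrite !In_filt. intuition.
    + apply Nat.eqb_neq in E. simpl. simpl in Hb. rewrite !In_filt, IHC by tauto. split.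
      * intros [[[H1 H2]|[H1 H2]] H3]; [left; tauto | right; subst; auto].
      * intros [[H1 [H2 H3]]|[H1 [H2 H3]]]; [tauto| subst; split; [right; auto| intro Heq; apply Hb; left; congruence]].
  - assert (E : ren a b n :: names_c (rename_c a b c) ++ flat_map names_v (map (rename_v a b) l)
      = map (ren a b) (n :: names_c c ++ flat_map names_v l)).
    { simpl. rewrite map_app, flat_rename, (proj2 (names_rename a b)). auto. }
    rewrite E, In_map_ren. tauto.
Qed.

Fixpoint ok (C : config) : Prop :=
  match C with
  | KPar C1 C2 => ok C1 /\ ok C2
  | KNu _ C => ok C
  | KActor _ M _ => exists A, ctyp' [] A M TUnit
  end.

Lemma ok_rename : forall a b C, ok (rename_conf a b C) <-> ok C.
Proof.
  induction C; simpl.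
  - tauto.
  - destruct (Nat.eqb n a); simpl; tauto.
  - split; intros [A H]; exists A.
    + eapply (proj2 (rename_typ'_inv a b)); eauto.
    + apply (proj2 (rename_typ' a b)); auto.
Qed.

Lemma scong_inv : forall C D, scong C D ->
  (forall n, In n (fn_conf C) <-> In n (fn_conf D)) /\ (ok C <-> ok D).
Proof.
  induction 1; simpl.
  - tauto.
  - split; [intro n; rewrite (proj1 IHscong n)|]; tauto.
  - destruct IHscong1 as [H1 H2], IHscong2 as [H3 H4]. split; [intro n; rewrite H1, H3|]; tauto.
  - split; [intro n; rewrite !in_app_iff|]; tauto.
  - split; [intro n; rewrite !in_app_iff|]; tauto.
  - split; [|tauto]. intro n. rewrite !in_app_iff, !In_filt, !in_app_iff.
    split; intuition; subst; contradiction.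
  - split; [|rewrite ok_rename; tauto]. intro n.
    rewrite !In_filt, fn_rename by auto. split.
    + intros [Hn Hne]. split; [left; auto|]. intros ->. apply H, fn_all; auto.
    + intros [[[? ?]|[? ?]] ?]; [auto|contradiction].
  - destruct IHscong as [H1 H2]. split; [intro n; rewrite !in_app_iff, H1|]; tauto.
  - destruct IHscong as [H1 H2]. split; [intro n; rewrite !In_filt, H1|]; tauto.
Qed.

Lemma ktyp_ok : forall G D C, ktyp G D C -> allTRef G -> ok C.
Proof.
  induction 1; simpl; intros.
  - auto.
  - apply IHktyp. intros n T. unfold nupd. destruct (n =? a); eauto.
    intro E; inversion E; eauto.
  - exists A. apply (proj2 (typ_to' G)); auto.
Qed.

Lemma ktyp_fn : forall G D C, ktyp G D C -> forall n, In n (fn_conf C) -> G n <> None.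
Proof.
  induction 1; simpl; intros n Hn.
  - rewrite in_app_iff in Hn; intuition eauto.
  - rewrite In_filt in Hn. destruct Hn as [Hn Hne]. apply IHktyp in Hn.
    unfold nupd in Hn. apply Nat.eqb_neq in Hne. rewrite Hne in Hn. auto.
  - destruct Hn as [<-|Hn]; [congruence|]. rewrite in_app_iff in Hn. destruct Hn.
    + eapply (proj2 (typ_names G n)); eauto.
    + apply in_flat_map in H2. destruct H2 as [V [HV HnV]].
      eapply (proj1 (typ_names G n)); eauto.
Qed.

Definition redex (R : comp) : Prop :=
  (exists M V, R = CApp (VLam M) V) \/ (exists V N, R = CLet (CRet V) N) \/
  (exists M, R = CSpawn M) \/ (exists V b, R = CSend V (VName b)) \/ R = CRecv \/ R = CSelf.

Lemma progress : forall L A M B, ctyp' L A M B -> L = [] ->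
  (exists W, M = CRet W) \/ exists E R, M = plug E R /\ redex R.
Proof.
  induction 1; intros HL; subst.
  - right. inversion H; subst; try (simpl in *; discriminate).
    + destruct n; discriminate.
    + exists EHole, (CApp (VLam M) W). split; auto. left; eauto.
  - right. destruct (IHctyp'1 eq_refl) as [[W ->]|[E [R [-> HR]]]].
    + exists EHole, (CLet (CRet W) N). split; auto. right; left; eauto.
    + exists (ELet E N), R. auto.
  - left; eauto.
  - right. inversion H0; subst.
    + destruct n; discriminate.
    + exists EHole, (CSend V (VName a)). split; auto. do 3 right; left; eauto.
  - right. exists EHole, CRecv. split; auto. do 4 right; left; auto.
  - right. exists EHole, (CSpawn M). split; auto. do 2 right; left; eauto.
  - right. exists EHole, CSelf. split; auto. do 5 right; auto.
Qed.

Lemma sc_parr : forall C C' D, scong C C' -> scong (KPar D C) (KPar D C').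
Proof.
  intros. eapply sc_trans; [apply sc_comm|]. eapply sc_trans; [apply sc_ctx_par; eauto|]. apply sc_comm.
Qed.

Lemma focus : forall l x z, In z (x :: l) ->
  (l = [] /\ z = x) \/
  exists y l3, scong (par_of x l) (KPar (actor_of z) (par_of y l3)) /\
    forall w, In w (x :: l) -> w = z \/ In w (y :: l3).
Proof.
  induction l as [|y l IH]; intros x z Hz.
  - left. destruct Hz as [<-|[]]. auto.
  - right. destruct Hz as [<-|Hz].
    + exists y, l. split; [apply sc_refl|]. intros w [<-|Hw]; auto.
    + destruct (IH y z Hz) as [[-> <-]|[y' [l3 [Hs Hm]]]].
      * exists x, []. simpl. split; [apply sc_comm|].
        intros w [<-|[<-|[]]]; simpl; auto.
      * exists x, (y' :: l3). split.
        -- simpl. eapply sc_trans; [apply sc_parr; exact Hs|].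
           eapply sc_trans; [apply sc_assoc|].
           eapply sc_trans; [apply sc_ctx_par; apply sc_comm|].
           apply sc_sym, sc_assoc.
        -- intros w [<-|Hw]; [right; left; auto|].
           destruct (Hm w Hw) as [?|Hw']; auto. right; right; auto.
Qed.

Lemma step1 : forall x l z D, In z (x :: l) -> kstep0 (actor_of z) D ->
  exists C1 D1, scong (par_of x l) C1 /\ kstep0 C1 D1.
Proof.
  intros x l z D Hz Hs. destruct (focus l x z Hz) as [[-> ->]|[y [l3 [Hsc _]]]].
  - exists (actor_of x), D. split; [apply sc_refl|auto].
  - do 2 eexists. split; [exact Hsc|]. apply ks_ctx_par; eauto.
Qed.

Lemma step2 : forall x l z z' D, In z (x :: l) -> In z' (x :: l) -> z <> z' ->
  kstep0 (KPar (actor_of z) (actor_of z')) D ->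
  exists C1 D1, scong (par_of x l) C1 /\ kstep0 C1 D1.
Proof.
  intros x l z z' D Hz Hz' Hne Hs. destruct (focus l x z Hz) as [[-> ->]|[y [l3 [Hsc Hm]]]].
  - destruct Hz' as [->|[]]. congruence.
  - destruct (Hm z' Hz') as [?|Hz'']; [congruence|].
    destruct (focus l3 y z' Hz'') as [[-> ->]|[y' [l4 [Hsc' _]]]].
    + do 2 eexists. split; [exact Hsc|]. exact Hs.
    + do 2 eexists. split.
      * eapply sc_trans; [exact Hsc|]. eapply sc_trans; [apply sc_parr; exact Hsc'|]. apply sc_assoc.
      * apply ks_ctx_par. exact Hs.
Qed.

Lemma nus_lift : forall ns P C1 D1, scong P C1 -> kstep0 C1 D1 ->
  scong (nus ns P) (nus ns C1) /\ kstep0 (nus ns C1) (nus ns D1).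
Proof.
  induction ns; simpl; intros; auto.
  destruct (IHns P C1 D1 H H0). split; [apply sc_ctx_nu|apply ks_ctx_nu]; auto.
Qed.

Lemma fn_nus : forall ns P n, In n (fn_conf P) -> ~ In n ns -> In n (fn_conf (nus ns P)).
Proof.
  induction ns; simpl; intros; auto. rewrite In_filt. split; auto.
Qed.

Lemma fn_par : forall l x z n, In z (x :: l) -> In n (fn_conf (actor_of z)) -> In n (fn_conf (par_of x l)).
Proof.
  induction l; simpl; intros x z n [<-|Hz] Hn; try contradiction; auto.
  - rewrite in_app_iff. auto.
  - rewrite in_app_iff. right. eapply IHl; eauto.
Qed.

Lemma ok_par : forall l x z, ok (par_of x l) -> In z (x :: l) -> ok (actor_of z).
Proof.
  induction l; simpl; intros x z Hok [<-|Hz]; try contradiction; try tauto.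
  eapply IHl; [apply Hok|exact Hz].
Qed.

Lemma ok_nus : forall ns P, ok (nus ns P) -> ok P.
Proof. induction ns; simpl; auto. Qed.

Lemma names_plug : forall E R n, In n (names_c R) -> In n (names_c (plug E R)).
Proof. induction E; simpl; intros; auto. apply in_or_app; auto. Qed.

Theorem theorem16 :
  forall (C : config),
    ktyp nempty [] C ->
    (forall C', ~ kstep C C') ->
    forall (x : nat * comp * list val) (l : list (nat * comp * list val)),
      scong C (canon x l) ->
      forall a M mb, In (a, M, mb) (x :: l) ->
        (exists W, M = CRet W) \/ (exists E, M = plug E CRecv /\ mb = []).
Proof.
  intros C HT Hns x l Hsc a M mb Hin.
  destruct (scong_inv _ _ Hsc) as [Hfn Hok].
  assert (Hok' : ok (canon x l)).
  { apply Hok. eapply ktyp_ok; eauto. try (intros n T E; discriminate). }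
  assert (Hcl : forall n, ~ In n (fn_conf (canon x l))).
  { intros n Hn. apply Hfn in Hn. exact (ktyp_fn _ _ _ HT n Hn eq_refl). }
  assert (Hstep : forall C1 D1, scong (par_of x l) C1 -> kstep0 C1 D1 -> False).
  { intros C1 D1 H1 H2. destruct (nus_lift (map (fun y => fst (fst y)) (x :: l)) _ _ _ H1 H2).
    apply (Hns (nus (map (fun y => fst (fst y)) (x :: l)) D1)).
    exists (nus (map (fun y => fst (fst y)) (x :: l)) C1), (nus (map (fun y => fst (fst y)) (x :: l)) D1).
    split; [eapply sc_trans; eauto|split; auto; apply sc_refl]. }
  unfold canon in Hok'. apply ok_nus in Hok'.
  destruct (ok_par _ _ _ Hok' Hin) as [A HA].
  destruct (progress _ _ _ _ HA eq_refl) as [HW|[E [R [-> HR]]]]; [left; auto|].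
  destruct HR as [[M' [V ->]]|[[V [N ->]]|[[M' ->]|[[V [b ->]]|[->| ->]]]]].
  - exfalso. eapply step1 in Hin; [|apply ks_term, ms_ctx, ms_beta]. destruct Hin as [? [? [? ?]]]; eauto.
  - exfalso. eapply step1 in Hin; [|apply ks_term, ms_ctx, ms_let]. destruct Hin as [? [? [? ?]]]; eauto.
  - exfalso. set (ls := fn_conf (KActor a (plug E (CSpawn M')) mb)).
    assert (Hf : ~ In (S (list_max ls)) ls).
    { intro Hi. assert (Hle := proj1 (list_max_le ls (list_max ls)) (le_n _)).
      rewrite Forall_forall in Hle. apply Hle in Hi. lia. }
    eapply step1 in Hin; [|apply ks_spawn; exact Hf]. destruct Hin as [? [? [? ?]]]; eauto.
  - exfalso. destruct (Nat.eq_dec b a) as [->|Hba].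
    + eapply step1 in Hin; [|apply ks_send_self]. destruct Hin as [? [? [? ?]]]; eauto.
    + assert (Hb : In b (map (fun y => fst (fst y)) (x :: l))).
      { destruct (in_dec Nat.eq_dec b (map (fun y => fst (fst y)) (x :: l))) as [?|Hn]; auto.
        exfalso. apply (Hcl b). unfold canon. apply fn_nus; auto.
        eapply fn_par; [exact Hin|]. simpl. right. apply in_or_app. left.
        apply names_plug. simpl. rewrite in_app_iff. right. left. auto. }
      apply in_map_iff in Hb. destruct Hb as [[[b' M2] mb2] [Heq Hin2]]. simpl in Heq. subst b'.
      assert (Hne : (a, plug E (CSend V (VName b)), mb) <> (b, M2, mb2)) by congruence.
      destruct (step2 x l _ _ _ Hin Hin2 Hne (ks_send a E V b mb M2 mb2)) as [? [? [? ?]]]; eauto.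
  - destruct mb as [|W mb].
    + right. eauto.
    + exfalso. eapply step1 in Hin; [|apply ks_recv]. destruct Hin as [? [? [? ?]]]; eauto.
  - exfalso. eapply step1 in Hin; [|apply ks_self]. destruct Hin as [? [? [? ?]]]; eauto.
Qed.
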